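(* Let $\kappa=2$. For any $K\ge0$, any distribution generating $(x_t,\mathscr C_t)_{t=1}^V$, and any class $L\subseteq[2]^{\mathcal X}$ of benchmark predictors, there exists a strategy for choosing the labels $y_1,\dots,y_V$ such that every prediction algorithm satisfies $$\mathbb E[\mathbf{Reg}]\ge\frac12\,\mathbb E_{(\mathscr C,x)_{1:V}}\mathrm{Rad}_V(L_K(\mathcal I_{1:V})).$$
   Context: Notation: $[n]=\{1,\dots,n\}$. Setting: $V\ge1$, a set $\mathcal X$, a class $L$ of functions $\mathcal X\to[\kappa]$. A constraint $c=(S_c,R_c)$, $S_c\subseteq[V]$, $R_c:[\kappa]^{S_c}\to\mathbb R_{\ge0}$; $c(g)=R_c(g|_{S_c})$ for $g\in[\kappa]^V$. On rounds $t=1,\dots,V$ the forecaster observes $x_t\in\mathcal X$ and a finite constraint set $\mathscr C_t$ ($\mathcal I_t=(\mathscr C_t,x_t)$, drawn from a known distribution), predicts $\widehat y_t\in[\kappa]$ (possibly randomized), then observes $y_t\in[\kappa]$. $L_K(\mathcal I_{1:V})=\{f\in L:\sum_{c\in\cup_t\mathscr C_t}c((f(x_1),\dots,f(x_V)))\le K\}$; $\mathbf{Reg}=\sum_t\mathbf 1\{\widehat y_t\ne y_t\}-\inf_{f\in L_K(\mathcal I_{1:V})}\sum_t\mathbf 1\{f(x_t)\ne y_t\}$, expectation over all randomness. $\mathrm{Rad}_V(L_K(\mathcal I_{1:V}))=\mathbb E_{\boldsymbol\epsilon}\sup_{f\in L_K(\mathcal I_{1:V})}\sum_{j=1}^V\sum_{k=1}^\kappa\boldsymbol\epsilon_{j,k}\mathbf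 1\{f(x_j)=k\}$ with $\boldsymbol\epsilon_{j,k}$ i.i.d. uniform on $\{-1,1\}$. *)

(* Defs.v *)
From HB Require Import structures.
From mathcomp Require Import all_boot all_order all_algebra.
From mathcomp Require Import all_classical all_reals all_analysis.
From mathcomp Require Import measurable_realfun.
Set Implicit Arguments. Unset Strict Implicit. Unset Printing Implicit Defensive.
Import Order.TTheory GRing.Theory Num.Theory.
Local Open Scope classical_set_scope.
Local Open Scope ring_scope.

(* kappa = 2 : the label set [2] = {1,2} is represented by 'I_2 = {0,1}. *)

Section Defs.
Variables (R : realType) (V : nat).

Definition scope_t (S : {set 'I_V}) := {i : 'I_V | i \in S}.

Definition constraint := {S : {set 'I_V} & {ffun {ffun scope_t S -> 'I_2} -> R}}.

Definition cscope (c : constraint) : {set 'I_V} := tag c.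

Definition ceval (c : constraint) (g : {ffun 'I_V -> 'I_2}) : R :=
  tagged c [ffun i : scope_t (tag c) => g (val i)].

Definition constraint_nonneg (c : constraint) : Prop :=
  forall h, 0 <= tagged c h.

Definition prefix (T : Type) (g : 'I_V -> T) (n : nat) : seq T :=
  map g (take n (enum 'I_V)).

Variable X : Type.

Definition LK (L : set (X -> 'I_2)) (K : R)
    (x : 'I_V -> X) (C : 'I_V -> seq constraint) : set (X -> 'I_2) :=
  [set f | L f /\
     \sum_(c <- undup (flatten [seq C t | t <- enum 'I_V]))
        ceval c [ffun t => f (x t)] <= K].

Definition sgn (b : bool) : R := if b then 1 else -1.

(* Rad_V(F) = E_eps sup_{f in F} sum_j sum_k eps_{j,k} 1{f(x_j)=k},
   eps uniform on {-1,1}^{V x 2} (encoded as booleans). *)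
Definition Rad (F : set (X -> 'I_2)) (x : 'I_V -> X) : \bar R :=
  (\sum_(e : {ffun 'I_V * 'I_2 -> bool})
     ((2 ^- (2 * V))%:E *
      ereal_sup [set (\sum_(j < V) \sum_(k < 2)
                        sgn (e (j, k)) * (f (x j) == k)%:R)%:E
                | f in F]))%E.

(* History seen at round t: instances I_1..I_t, labels y_1..y_{t-1},
   predictions yhat_1..yhat_{t-1}. A (behavioural, randomized) strategy maps a
   round and a history to a distribution on [2]. *)
Definition strategy :=
  'I_V -> seq (X * seq constraint) -> seq 'I_2 -> seq 'I_2 -> 'I_2 -> R.

Definition valid_strategy (s : strategy) : Prop :=
  forall t h ys yhs, (forall k, 0 <= s t h ys yhs k) /\
                     \sum_(k < 2) s t h ys yhs k = 1.

Definition play_weight (A B : strategy)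
    (x : 'I_V -> X) (C : 'I_V -> seq constraint)
    (yh y : {ffun 'I_V -> 'I_2}) : R :=
  \prod_(t < V)
    (let h := prefix (fun i => (x i, C i)) t.+1 in
     let ys := prefix y t in
     let yhs := prefix yh t in
     A t h ys yhs (yh t) * B t h ys yhs (y t)).

Definition regret (L : set (X -> 'I_2)) (K : R)
    (x : 'I_V -> X) (C : 'I_V -> seq constraint)
    (yh y : {ffun 'I_V -> 'I_2}) : \bar R :=
  ((\sum_(t < V) (yh t != y t)%:R)%:E -
   ereal_inf [set (\sum_(t < V) (f (x t) != y t)%:R)%:E | f in LK L K x C])%E.

Definition cond_exp_regret (L : set (X -> 'I_2)) (K : R) (A B : strategy)
    (x : 'I_V -> X) (C : 'I_V -> seq constraint) : \bar R :=
  (\sum_(yh : {ffun 'I_V -> 'I_2}) \sum_(y : {ffun 'I_V -> 'I_2})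
     ((play_weight A B x C yh y)%:E * regret L K x C yh y))%E.

End Defs.

Arguments Rad {R V X}.
Arguments LK {R V X}.
Arguments regret {R V X}.
Arguments cond_exp_regret {R V X}.
Arguments play_weight {R V X}.

(* Main.v *)
Require Import Defs.
From HB Require Import structures.
From mathcomp Require Import all_boot all_order all_algebra.
From mathcomp Require Import all_classical all_reals all_analysis.
From mathcomp Require Import measurable_realfun.
From mathcomp Require Import ring lra.
Import Order.TTheory GRing.Theory Num.Theory.
Local Open Scope classical_set_scope.
Local Open Scope ring_scope.
Section Comb.
Variable R : realFieldType.

Lemma sum_tuple_cons (T : finType) n (F : n.+1.-tuple T -> R) :
  \sum_(t : n.+1.-tuple T) F t = \sum_(a : T) \sum_(t : n.-tuple T) F [tuple of a :: t].
Proof.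
rewrite pair_big /=.
rewrite (reindex (fun p : T * n.-tuple T => [tuple of p.1 :: p.2])) //=.
apply: onW_bij.
exists (fun t : n.+1.-tuple T => (thead t, behead_tuple t)).
  by move=> [a t] /=; rewrite theadE; congr pair; apply: val_inj.
by move=> t /=; rewrite [RHS]tuple_eta.
Qed.

Definition W {n} (al : nat -> seq 'I_2 -> seq 'I_2 -> 'I_2 -> R)
   (u v : n.-tuple 'I_2) : R :=
  \prod_(i < n) (al i (take i v) (take i u) (tnth u i) * 2^-1).

Lemma Wcons n al a b (u v : n.-tuple 'I_2) :
  W al [tuple of a :: u] [tuple of b :: v] =
  al 0%N [::] [::] a * 2^-1 *
  W (fun t s1 s2 c => al t.+1 (b :: s1) (a :: s2) c) u v.
Proof.
rewrite /W big_ord_recl /= tnth0; congr (_ * _).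
by apply: eq_bigr => i _; rewrite tnthS.
Qed.

Definition valid_al (al : nat -> seq 'I_2 -> seq 'I_2 -> 'I_2 -> R) :=
  forall t s1 s2, \sum_(a < 2) al t s1 s2 a = 1.

Lemma K0 n : forall al (phi : n.-tuple 'I_2 -> R), valid_al al ->
  \sum_(u : n.-tuple 'I_2) \sum_(v : n.-tuple 'I_2) W al u v * phi v =
  (2^-1) ^+ n * \sum_(v : n.-tuple 'I_2) phi v.
Proof.
elim: n => [|n IH] al phi hal.
  rewrite expr0 mul1r.
  have H0 : forall F : 0.-tuple 'I_2 -> R, \sum_(u : 0.-tuple 'I_2) F u = F [tuple].
    move=> F; rewrite (big_pred1 [tuple]) // => t /=; apply/esym/eqP; exact: tuple0.
  by rewrite !H0 /W big_ord0 mul1r.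
pose al' a b := fun t s1 s2 c => al t.+1 (b :: s1) (a :: s2) c.
have hal' : forall a b, valid_al (al' a b) by move=> a b t s1 s2; exact: hal.
rewrite sum_tuple_cons.
transitivity (\sum_(a < 2) \sum_(b < 2) (al 0%N [::] [::] a * 2^-1) *
   \sum_(u : n.-tuple 'I_2) \sum_(v : n.-tuple 'I_2) W (al' a b) u v * phi [tuple of b :: v]).
  apply: eq_bigr => a _.
  under eq_bigr => u _ do rewrite sum_tuple_cons.
  rewrite exchange_big; apply: eq_bigr => b _.
  rewrite big_distrr; apply: eq_bigr => u _.
  rewrite big_distrr; apply: eq_bigr => v _.
  by rewrite Wcons /= mulrA.
under eq_bigr => a _ do (under eq_bigr => b _ do rewrite IH //).
rewrite sum_tuple_cons exprS.
under eq_bigr => a _ do (under eq_bigr => b _ do rewrite mulrCA -!mulrA).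
under eq_bigr => a _ do rewrite -big_distrr /=.
rewrite -big_distrr /= exchange_big /=.
under eq_bigr => b _ do rewrite -big_distrl /= hal mul1r.
by rewrite -big_distrr /= mulrA [_ * 2^-1]mulrC.
Qed.

Lemma mass n al : valid_al al ->
  \sum_(u : n.-tuple 'I_2) \sum_(v : n.-tuple 'I_2) W al u v = 1.
Proof.
move=> hal; have := @K0 n al (fun _ => 1) hal.
under eq_bigr => u _ do under eq_bigr => v _ do rewrite mulr1.
move=> ->; rewrite sumr_const card_tuple card_ord natrX.
by rewrite -exprMn mulVf ?expr1n // pnatr_eq0.
Qed.

Definition mism {n} (u v : n.-tuple 'I_2) : R :=
  \sum_(i < n) (tnth u i != tnth v i)%:R.

Lemma mism_cons n a b (u v : n.-tuple 'I_2) :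
  mism [tuple of a :: u] [tuple of b :: v] = (a != b)%:R + mism u v.
Proof.
by rewrite /mism big_ord_recl !tnth0; congr (_ + _); apply: eq_bigr => i _; rewrite !tnthS.
Qed.

Lemma sum_neq2 (a : 'I_2) : \sum_(b < 2) ((a != b)%:R : R) = 1.
Proof.
rewrite big_ord_recl big_ord_recl big_ord0.
by case: a => [[|[|m]]] //= Hm; rewrite ?add0r ?addr0.
Qed.

Lemma K1 n : forall al, valid_al al ->
  \sum_(u : n.-tuple 'I_2) \sum_(v : n.-tuple 'I_2) W al u v * mism u v =
  n%:R / 2.
Proof.
elim: n => [|n IH] al hal.
  rewrite mul0r; apply: big1 => u _; apply: big1 => v _.
  by rewrite /mism big_ord0 mulr0.
pose al' a b := fun t s1 s2 c => al t.+1 (b :: s1) (a :: s2) c.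
have hal' : forall a b, valid_al (al' a b) by move=> a b t s1 s2; exact: hal.
rewrite sum_tuple_cons.
transitivity (\sum_(a < 2) \sum_(b < 2) (al 0%N [::] [::] a * 2^-1) *
   \sum_(u : n.-tuple 'I_2) \sum_(v : n.-tuple 'I_2) W (al' a b) u v *
      ((a != b)%:R + mism u v)).
  apply: eq_bigr => a _.
  under eq_bigr => u _ do rewrite sum_tuple_cons.
  rewrite exchange_big; apply: eq_bigr => b _.
  rewrite big_distrr; apply: eq_bigr => u _.
  rewrite big_distrr; apply: eq_bigr => v _.
  by rewrite Wcons mism_cons /= mulrA.
transitivity (\sum_(a < 2) \sum_(b < 2) (al 0%N [::] [::] a * 2^-1) *
   ((a != b)%:R + n%:R / 2)).
  apply: eq_bigr => a _; apply: eq_bigr => b _; congr (_ * _).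
  under eq_bigr => u _ do (under eq_bigr => v _ do rewrite mulrDr; rewrite big_split /=).
  rewrite big_split /= IH //.
  under eq_bigr => u _ do rewrite -big_distrl /=.
  by rewrite -big_distrl /= (@mass n _ (hal' a b)) mul1r.
transitivity (\sum_(a < 2) al 0%N [::] [::] a * (n.+1%:R / 2)).
  apply: eq_bigr => a _; rewrite -big_distrr /= big_split /= sum_neq2.
  rewrite sumr_const card_ord -mulr_natr.
  have h2 : (2 : R) != 0 by rewrite pnatr_eq0.
  by rewrite -natr1; field.
by rewrite -big_distrl /= hal mul1r.
Qed.
End Comb.

Section Key.
Variables (R : realFieldType) (V : nat) (Gs : {set {ffun 'I_V -> 'I_2}})
  (g0 : {ffun 'I_V -> 'I_2}) (hg0 : g0 \in Gs).

Definition gm (H : {ffun 'I_V -> 'I_2} -> R) : R :=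
  \big[Order.max/H g0]_(g in Gs) H g.

Lemma gm_ub H g : g \in Gs -> H g <= gm H.
Proof. by move=> hg; apply: le_bigmax_cond. Qed.

Lemma gm_le H b : (forall g, g \in Gs -> H g <= b) -> gm H <= b.
Proof. by move=> hb; apply: bigmax_le => //; apply: hb. Qed.

Definition pck (c : R * R) (k : 'I_2) : R := if k == ord0 then c.1 else c.2.

Definition Tf (s : seq (R * R)) (g : {ffun 'I_V -> 'I_2}) : R :=
  \sum_(j < V) pck (nth (0, 0) s j) (g j).

Definition Phi s := gm (Tf s).

Lemma pck0 k : pck (0, 0) k = 0.
Proof. by rewrite /pck; case: ifP. Qed.

Lemma Tsplit p c q g : Tf (p ++ c :: q) g =
  Tf (p ++ (0, 0) :: q) g + \sum_(j < V) (((j : nat) == size p)%:R * pck c (g j)).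
Proof.
rewrite /Tf -big_split /=; apply: eq_bigr => j _.
rewrite !nth_cat; case: ltngtP => hj.
- by rewrite mul0r addr0.
- case E: ((j : nat) - size p)%N => [|k]; first by move: hj; rewrite -subn_gt0 E.
  by rewrite /= mul0r addr0.
- by rewrite hj subnn /= pck0 add0r mul1r.
Qed.

Lemma four p q :
  Phi (p ++ (1, 1) :: q) + Phi (p ++ (-1, -1) :: q) <=
  Phi (p ++ (1, -1) :: q) + Phi (p ++ (-1, 1) :: q).
Proof.
set T0 := Tf (p ++ (0, 0) :: q).
set io := \sum_(j < V) (((j : nat) == size p)%:R : R).
have e11 g : Tf (p ++ (1, 1) :: q) g = T0 g + io.
  rewrite Tsplit; congr (_ + _); apply: eq_bigr => j _.
  by rewrite /pck; case: ifP => _; rewrite mulr1.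
have eNN g : Tf (p ++ (-1, -1) :: q) g = T0 g - io.
  rewrite Tsplit -sumrN; congr (_ + _); apply: eq_bigr => j _.
  by rewrite /pck; case: ifP => _; rewrite mulrN1.
have e1N g : Tf (p ++ (1, -1) :: q) g + Tf (p ++ (-1, 1) :: q) g = 2 * T0 g.
  rewrite (Tsplit _ (1, -1)) (Tsplit _ (-1, 1)).
  have -> : \sum_(j < V) (((j : nat) == size p)%:R * pck (-1, 1) (g j)) =
      - \sum_(j < V) (((j : nat) == size p)%:R * pck (1, -1) (g j)).
    rewrite -sumrN; apply: eq_bigr => j _; rewrite /pck.
    by case: ifP => _ /=; rewrite ?mulrN1 ?mulr1 ?opprK.
  rewrite /T0; lra.
have h1 : Phi (p ++ (1, 1) :: q) <= gm T0 + io.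
  by apply: gm_le => g hg; rewrite e11 lerD2r gm_ub.
have h2 : Phi (p ++ (-1, -1) :: q) <= gm T0 - io.
  by apply: gm_le => g hg; rewrite eNN lerD2r gm_ub.
have h3 : gm T0 <= (Phi (p ++ (1, -1) :: q) + Phi (p ++ (-1, 1) :: q)) / 2.
  apply: gm_le => g hg.
  have a1 := @gm_ub (Tf (p ++ (1, -1) :: q)) g hg.
  have a2 := @gm_ub (Tf (p ++ (-1, 1) :: q)) g hg.
  have := e1N g; rewrite /Phi; lra.
move: h1 h2 h3; rewrite /Phi; lra.
Qed.

Definition sg2 (c : bool * bool) : R * R := (if c.1 then 1 else -1, if c.2 then 1 else -1).
Definition opc (b : 'I_2) : R * R := if b == ord0 then (1, -1) else (-1, 1).

Lemma key n : forall p,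
  \sum_(t : n.-tuple (bool * bool)) Phi (p ++ map sg2 t) <=
  2 ^+ n * \sum_(v : n.-tuple 'I_2) Phi (p ++ map opc v).
Proof.
elim: n => [|n IH] p.
  have H0 : forall (T : finType) (F : 0.-tuple T -> R), \sum_(u : 0.-tuple T) F u = F [tuple].
    move=> T F; rewrite (big_pred1 [tuple]) // => t /=; apply/esym/eqP; exact: tuple0.
  by rewrite !H0 expr0 mul1r.
rewrite sum_tuple_cons.
have -> : \sum_(a : bool * bool) \sum_(t : n.-tuple (bool * bool))
     Phi (p ++ map sg2 [tuple of a :: t]) =
   \sum_(a : bool * bool) \sum_(t : n.-tuple (bool * bool))
     Phi (rcons p (sg2 a) ++ map sg2 t).
  by apply: eq_bigr => a _; apply: eq_bigr => t _; rewrite cat_rcons.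
apply: (@le_trans _ _ (\sum_(a : bool * bool) 2 ^+ n *
     \sum_(v : n.-tuple 'I_2) Phi (rcons p (sg2 a) ++ map opc v))).
  by apply: ler_sum => a _; apply: IH.
rewrite -big_distrr /= exchange_big /= exprS -mulrA mulrCA.
apply: ler_wpM2l; first exact: exprn_ge0.
rewrite sum_tuple_cons [X in _ <= 2 * X]exchange_big /= big_distrr /=.
apply: ler_sum => v _.
under eq_bigr => a _ do rewrite cat_rcons.
rewrite -(pair_big xpredT xpredT (fun a b => Phi (p ++ sg2 (a, b) :: map opc v))) /=.
rewrite !big_bool /= !big_ord_recl big_ord0 /=.
have := four p (map opc v); rewrite /sg2 /opc /=.
lra.
Qed.
End Key.

Arguments gm {R V}.
Section Glue.
Variables (R : realType) (V : nat) (X : Type) (x : 'I_V -> X) (F : set (X -> 'I_2)).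

Definition code (f : X -> 'I_2) : {ffun 'I_V -> 'I_2} := [ffun j => f (x j)].
Definition Gs : {set {ffun 'I_V -> 'I_2}} :=
  [set g | `[< exists2 f, F f & code f = g >]].

Lemma in_Gs f : F f -> code f \in Gs.
Proof. by move=> Ff; rewrite inE; apply/asboolP; exists f. Qed.

Lemma Gs_in g : g \in Gs -> exists2 f, F f & code f = g.
Proof. by rewrite inE => /asboolP. Qed.

Variables (f0 : X -> 'I_2) (hf0 : F f0).
Let g0 := code f0.
Let hg0 : g0 \in Gs := @in_Gs f0 hf0.

Lemma sup_codes (H : {ffun 'I_V -> 'I_2} -> R) (h : (X -> 'I_2) -> R) :
  (forall f, h f = H (code f)) ->
  ereal_sup [set (h f)%:E | f in F] = (gm Gs g0 H)%:E.
Proof.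
move=> hh; apply/le_anti/andP; split.
  apply: ge_ereal_sup => _ [f Ff <-]; rewrite lee_fin hh.
  by apply: gm_ub; apply: in_Gs.
have hub g : g \in Gs -> ((H g)%:E <= ereal_sup [set (h f)%:E | f in F])%E.
  move=> /Gs_in [f Ff <-]; rewrite -hh; apply: ereal_sup_ubound; by exists f.
move: (hub _ hg0).
case E: (ereal_sup _) => [r| |] // _.
  rewrite lee_fin; apply: (@gm_le _ _ _ _ hg0) => g hg; have := hub _ hg; by rewrite E lee_fin.
by rewrite leey.
Qed.

Lemma inf_codes (H : {ffun 'I_V -> 'I_2} -> R) (h : (X -> 'I_2) -> R) :
  (forall f, h f = H (code f)) ->
  ereal_inf [set (h f)%:E | f in F] = (- gm Gs g0 (fun g => - H g))%:E.
Proof.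
move=> hh; rewrite /ereal_inf EFinN; congr (- _)%E.
rewrite -(@sup_codes (fun g => - H g) (fun f => - h f)); last by move=> f; rewrite hh.
congr ereal_sup; apply/seteqP; split => z /=.
  by move=> [_ [f Ff <-] <-]; exists f.
by move=> [f Ff <-]; exists (h f)%:E => //; exists f.
Qed.
End Glue.

Arguments Tf {R V}.
Arguments valid_al {R}.
Arguments W {R n}.
Arguments mism {R n}.
Arguments Phi {R V}.
Arguments sg2 {R}.
Arguments opc {R}.

Section Main.
Variables (R : realType) (V : nat) (X : Type).

Definition Bs : strategy R V X := fun _ _ _ _ _ => 2^-1.

Definition o1 : 'I_2 := Ordinal (isT : (1 < 2)%N).

Definition psi (t : V.-tuple (bool * bool)) : {ffun 'I_V * 'I_2 -> bool} :=
  [ffun jk => if jk.2 == ord0 then (tnth t jk.1).1 else (tnth t jk.1).2].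
Definition psi' (e : {ffun 'I_V * 'I_2 -> bool}) : V.-tuple (bool * bool) :=
  [tuple (e (j, ord0), e (j, o1)) | j < V].

Lemma psi_bij : bijective psi.
Proof.
exists psi'.
  move=> t; apply: eq_from_tnth => j; rewrite tnth_mktuple !ffunE /=.
  by case: (tnth t j).
move=> e; apply/ffunP => -[j k]; rewrite !ffunE tnth_mktuple /=.
by case: k => [[|[|m]]] Hk //=; congr (e (j, _)); apply: val_inj.
Qed.

Lemma sum_e (G : {ffun 'I_V * 'I_2 -> bool} -> R) :
  \sum_e G e = \sum_(t : V.-tuple (bool * bool)) G (psi t).
Proof. by rewrite (reindex psi) //; apply: onW_bij; apply: psi_bij. Qed.

Lemma sum_y (G : {ffun 'I_V -> 'I_2} -> R) :
  \sum_y G y = \sum_(v : V.-tuple 'I_2) G (finfun_of_tuple v).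
Proof.
rewrite (reindex (@finfun_of_tuple 'I_2 V)) //; apply: onW_bij.
by exists tuple_of_finfun; [exact: finfun_of_tupleK | exact: tuple_of_finfunK].
Qed.

Lemma Rs_psi t (g : {ffun 'I_V -> 'I_2}) :
  \sum_(j < V) \sum_(k < 2) sgn R (psi t (j, k)) * (g j == k)%:R =
  Tf (map sg2 t) g.
Proof.
rewrite /Tf; apply: eq_bigr => j _.
rewrite (nth_map (false, false)) ?size_tuple // -tnth_nth.
rewrite !big_ord_recl big_ord0 !ffunE /=.
case: (g j) => [[|[|m]]] Hm //=; case: (tnth t j) => [[] []];
  rewrite /sgn /pck /sg2 /=; lra.
Qed.

Lemma Dy_opp (v : V.-tuple 'I_2) (g : {ffun 'I_V -> 'I_2}) :
  Tf (map (@opc R) v) g =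
  V%:R - 2 * \sum_(j < V) (g j != finfun_of_tuple v j)%:R.
Proof.
have -> : (V%:R : R) = \sum_(j < V) (1 : R) by rewrite sumr_const card_ord.
rewrite mulr_sumr -sumrB /Tf; apply: eq_bigr => j _.
rewrite (nth_map ord0) ?size_tuple // -tnth_nth ffunE /opc /pck.
case: (g j) => [[|[|m]]] Hm //=; case: (tnth v j) => [[|[|m']]] Hm' //=; lra.
Qed.
End Main.

Arguments psi {V}.
Section Point.
Variables (R : realType) (V : nat) (X : Type).

Definition alpha (A : strategy R V X) (x : 'I_V -> X) (C : 'I_V -> seq (constraint R V))
  : nat -> seq 'I_2 -> seq 'I_2 -> 'I_2 -> R :=
  fun t s1 s2 a => if @insub _ _ 'I_V t is Some i
                   then A i (Defs.prefix (fun i => (x i, C i)) t.+1) s1 s2 a else 2^-1.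

Lemma half_sum : \sum_(a < 2) (2^-1 : R) = 1.
Proof. rewrite sumr_const card_ord mulr2n; lra. Qed.

Lemma alpha_valid A x C : valid_strategy A -> valid_al (alpha A x C).
Proof.
move=> hA t s1 s2; rewrite /alpha; case: insub => [i|]; last exact: half_sum.
exact: (hA _ _ _ _).2.
Qed.

Lemma map_fot (v : V.-tuple 'I_2) n :
  map (finfun_of_tuple v) (take n (enum 'I_V)) = take n v.
Proof.
rewrite map_take; congr take; rewrite -[RHS](map_tnth_enum v).
by apply: eq_map => j; rewrite ffunE.
Qed.

Lemma pw_W A x C (u v : V.-tuple 'I_2) :
  play_weight A (Bs R V X) x C (finfun_of_tuple u) (finfun_of_tuple v) =
  W (alpha A x C) u v.
Proof.
rewrite /play_weight /W; apply: eq_bigr => i _ /=.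
rewrite /alpha (_ : @insub _ _ 'I_V (i : nat) = Some i); last exact: valK.
by rewrite /Defs.prefix !map_fot /Bs ffunE.
Qed.

Definition mism' (g y : {ffun 'I_V -> 'I_2}) : R := \sum_(t < V) (g t != y t)%:R.

Lemma pointwise L K (x : 'I_V -> X) (C : 'I_V -> seq (constraint R V))
    (A : strategy R V X) (hA : valid_strategy A) :
  ((1/2)%:E * Rad (LK L K x C) x <= cond_exp_regret L K A (Bs R V X) x C)%E.
Proof.
set F := LK L K x C.
have [[f0 Ff0]|F0] := pselect (exists f, F f); last first.
  have E0 : forall (h : (X -> 'I_2) -> \bar R), [set h f | f in F] = set0.
    by move=> h; apply/seteqP; split => // z [f Ff _]; apply: F0; exists f.
  have hc : (0 < (2 ^- (2 * V))%:E :> \bar R)%E by rewrite lte_fin invr_gt0 exprn_gt0.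
  have -> : Rad (R:=R) F x = -oo%E.
    rewrite /Rad (bigD1 ([ffun=> true] : {ffun 'I_V * 'I_2 -> bool})) //= E0 ereal_sup0 gt0_muleNy //.
  by rewrite gt0_muleNy ?leNye // lte_fin; lra.
set Gs0 := @Gs V X x F.
set g0 := @code V X x f0.
have hg0 : g0 \in Gs0 := @in_Gs V X x F f0 Ff0.
pose Rs (e : {ffun 'I_V * 'I_2 -> bool}) (g : {ffun 'I_V -> 'I_2}) : R :=
  \sum_(j < V) \sum_(k < 2) sgn R (e (j, k)) * (g j == k)%:R.
pose gmN (y : {ffun 'I_V -> 'I_2}) := gm Gs0 g0 (fun g => - mism' g y).
have HR : Rad (R:=R) F x =
    ((2 ^- (2 * V)) * \sum_(e : {ffun 'I_V * 'I_2 -> bool}) gm Gs0 g0 (Rs e))%:E.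
  rewrite /Rad mulr_sumr -sumEFin; apply: eq_bigr => e _.
  rewrite EFinM; congr (_ * _)%E.
  apply: (@sup_codes R V X x F f0 Ff0 (Rs e)) => f.
  by rewrite /Rs; apply: eq_bigr => j _; apply: eq_bigr => k _; rewrite ffunE.
have HC : cond_exp_regret L K A (Bs R V X) x C =
   (\sum_(yh : {ffun 'I_V -> 'I_2}) \sum_(y : {ffun 'I_V -> 'I_2})
      play_weight A (Bs R V X) x C yh y *
        (\sum_(t < V) (yh t != y t)%:R + gmN y))%:E.
  rewrite /cond_exp_regret -sumEFin; apply: eq_bigr => yh _.
  rewrite -sumEFin; apply: eq_bigr => y _.
  rewrite EFinM; congr (_ * _)%E.
  rewrite /regret (@inf_codes R V X x F f0 Ff0 (fun g => mism' g y)); last first.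
    by move=> f; rewrite /mism'; apply: eq_bigr => t _; rewrite ffunE.
  by rewrite -EFinB opprK.
rewrite HR HC -EFinM lee_fin.
have k1 : \sum_(e : {ffun 'I_V * 'I_2 -> bool}) gm Gs0 g0 (Rs e) <=
    2 ^+ V * \sum_(v : V.-tuple 'I_2) (V%:R + 2 * gmN (finfun_of_tuple v)).
  rewrite sum_e.
  have -> : \sum_(t : V.-tuple (bool * bool)) gm Gs0 g0 (Rs (psi t)) =
            \sum_(t : V.-tuple (bool * bool)) Phi Gs0 g0 ([::] ++ map sg2 t).
    apply: eq_bigr => t _; rewrite /Phi /=; congr gm; apply/funext => g.
    exact: Rs_psi.
  apply: le_trans (@key R V Gs0 g0 hg0 V [::]) _.
  apply: ler_wpM2l; first exact: exprn_ge0.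
  apply: ler_sum => v _; rewrite /Phi /=.
  apply: (@gm_le _ _ _ _ hg0) => g hg; rewrite Dy_opp.
  have := @gm_ub R V Gs0 g0 (fun g => - mism' g (finfun_of_tuple v)) g hg.
  rewrite /gmN /mism' /=; lra.
have k2 : \sum_(yh : {ffun 'I_V -> 'I_2}) \sum_(y : {ffun 'I_V -> 'I_2})
      play_weight A (Bs R V X) x C yh y *
        (\sum_(t < V) (yh t != y t)%:R + gmN y) =
    V%:R / 2 + (2^-1) ^+ V * \sum_(v : V.-tuple 'I_2) gmN (finfun_of_tuple v).
  rewrite sum_y; under eq_bigr => u _ do rewrite sum_y.
  under eq_bigr => u _ do (under eq_bigr => v _ do rewrite pw_W mulrDr; rewrite big_split /=).
  rewrite big_split /=; congr (_ + _).
    rewrite -(@K1 R V _ (@alpha_valid A x C hA)); apply: eq_bigr => u _; apply: eq_bigr => v _.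
    by congr (_ * _); rewrite /mism; apply: eq_bigr => t _; rewrite !ffunE.
  exact: (@K0 R V _ (fun v => gmN (finfun_of_tuple v)) (@alpha_valid A x C hA)).
rewrite k2.
apply: (@le_trans _ _ (1 / 2 * (2 ^- (2 * V) *
    (2 ^+ V * \sum_(v : V.-tuple 'I_2) (V%:R + 2 * gmN (finfun_of_tuple v)))))).
  apply: ler_wpM2l; first lra.
  by apply: ler_wpM2l; [rewrite invr_ge0 exprn_ge0 | exact: k1].
rewrite big_split /= sumr_const card_tuple card_ord -mulr_sumr.
set S := \sum_(v : V.-tuple 'I_2) gmN (finfun_of_tuple v).
rewrite -[V%:R *+ _]mulr_natr natrX mulnC exprM exprVn.
have hc : (2 ^+ V : R) != 0 by rewrite expf_neq0 // pnatr_eq0.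
rewrite le_eqVlt; apply/orP; left; apply/eqP.
by field.
Qed.
End Point.

Lemma scale_sub (R : realType) (k : R) (a b : \bar R) : 0 < k -> (0 <= b)%E ->
  (k%:E * (a - b) <= k%:E * a - k%:E * b)%E.
Proof.
move=> hk; case: b => [r| |] // hb.
  case: a => [s| |].
  - by rewrite -!EFinM -EFinB lee_fin mulrBr.
  - by rewrite /= addye // gt0_muley ?lte_fin // addye.
  - by rewrite /= gt0_muleNy ?lte_fin // leNye.
by rewrite addeNy gt0_muleNy ?lte_fin // leNye.
Qed.

Theorem proposition1 (R : realType) (V : nat) (K : R) (hK : 0 <= K)
    (d : measure_display) (Omega : measurableType d)
    (P : probability Omega R) (X : Type)
    (xs : Omega -> 'I_V -> X) (Cs : Omega -> 'I_V -> seq (constraint R V))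
    (hC : forall w t c, c \in Cs w t -> constraint_nonneg c)
    (L : set (X -> 'I_2))
    (hmeasRad : measurable_fun setT (fun w => Rad (LK L K (xs w) (Cs w)) (xs w) : \bar R)) :
  exists B : strategy R V X, valid_strategy B /\
    forall A : strategy R V X, valid_strategy A ->
      measurable_fun setT (fun w => cond_exp_regret L K A B (xs w) (Cs w) : \bar R) ->
      ((1/2)%:E * \int[P]_w Rad (LK L K (xs w) (Cs w)) (xs w)
        <= \int[P]_w cond_exp_regret L K A B (xs w) (Cs w))%E.
Proof.
exists (Bs R V X); split.
  move=> t h ys yhs; split => [k|]; first by rewrite /Bs invr_ge0 ler0n.
  exact: half_sum.
move=> A hA hm.
set f := (fun w => Rad (LK L K (xs w) (Cs w)) (xs w) : \bar R).
set g := (fun w => cond_exp_regret L K A (Bs R V X) (xs w) (Cs w) : \bar R).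
have hfg : forall w, ((1/2)%:E * f w <= g w)%E.
  by move=> w; exact: pointwise.
have h0 : (0 : R) <= 1/2 by lra.
rewrite (integralE P setT f) (integralE P setT g).
have h1 : ((1/2)%:E * \int[P]_w f^\+ w <= \int[P]_w g^\+ w)%E.
  have E1 : (\int[P]_w ((1/2)%:E * f^\+ w) = (1/2)%:E * \int[P]_w f^\+ w)%E.
    apply: ge0_integralZl_EFin => //; try (by move=> w _; exact: funepos_ge0).
    exact: measurable_funepos.
  rewrite -E1.
  apply: ge0_le_integral => //.
  - by move=> w _; rewrite mule_ge0 // ?lee_fin // funepos_ge0.
  - by apply: measurable_funeM; exact: measurable_funepos.
  - exact: measurable_funepos.
  move=> w _.
  have := ge0_funeposM f h0; move=> /(congr1 (fun F => F w)) /= <-.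
  apply: (@funepos_le _ _ setT (fun w => (1/2)%:E * f w)%E g); last exact: in_setT.
  by move=> z _; exact: hfg.
have h2 : (\int[P]_w g^\- w <= (1/2)%:E * \int[P]_w f^\- w)%E.
  have E2 : (\int[P]_w ((1/2)%:E * f^\- w) = (1/2)%:E * \int[P]_w f^\- w)%E.
    apply: ge0_integralZl_EFin => //; try (by move=> w _; exact: funeneg_ge0).
    exact: measurable_funeneg.
  rewrite -E2.
  apply: ge0_le_integral => //; try (by move=> w _; exact: funeneg_ge0);
    try exact: measurable_funeneg;
    try (by apply: measurable_funeM; exact: measurable_funeneg).
  move=> w _.
  have := ge0_funenegM f h0; move=> /(congr1 (fun F => F w)) /= <-.
  apply: (@funeneg_le _ _ setT (fun w => (1/2)%:E * f w)%E g); last exact: in_setT.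
  by move=> z _; exact: hfg.
apply: (@le_trans _ _ ((1/2)%:E * \int[P]_w f^\+ w - (1/2)%:E * \int[P]_w f^\- w)%E).
  apply: scale_sub; first lra.
  by apply: integral_ge0 => w _; exact: funeneg_ge0.
exact: leeB h1 h2.
Qed.
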